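(* Let $f_1,f_2$ be strongly hyperbolic functions. Any two distinct elements $C,D\in\mathcal{C}^-(f_1,f_2)$ have at most two points in common.
   Context: Identify $\mathbb{S}^1$ with $\mathbb{R}\cup\{\infty\}$, $\mathcal{P}=\mathbb{S}^1\times\mathbb{S}^1$, $\mathbb{R}^+=(0,\infty)$. A function $f:\mathbb{R}^+\to\mathbb{R}^+$ is strongly hyperbolic if: (1) $\lim_{x\to0+}f(x)=+\infty$, $\lim_{x\to+\infty}f(x)=0$; (2) $f$ strictly convex; (3) $\lim_{x\to+\infty}f(x+b)/f(x)=1$ for each $b\in\mathbb{R}$; (4) $f$ differentiable; (5) $\ln|f'|$ strictly convex. For $a>0$, $b,c\in\mathbb{R}$: $f_{a,b,c}(x)=af_1(x+b)+c$ for $x>-b$, $f_{a,b,c}(x)=-af_2(-x-b)+c$ for $x<-b$; $\overline{f_{a,b,c}}=\{(x,f_{a,b,c}(x)):x\ne-b\}\cup\{(-b,\infty),(\infty,c)\}$; $\overline{l_{s,t}}=\{(x,sx+t):x\in\mathbb{R}\}\cup\{(\infty,\infty)\}$; $\mathcal{C}^-(f_1,f_2)=\{\overline{f_{a,b,c}}:a>0,b,c\in\mathbb{R}\}\cup\{\overline{l_{s,t}}:s<0,t\in\mathbb{R}\}$, a set of subsets of $\mathcal{P}$. *)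

(* Defs.v *)
From Stdlib Require Import Reals Lra.
From Coquelicot Require Import Coquelicot.
Open Scope R_scope.

(* S^1 = R ∪ {∞}: [Some x] is the real x, [None] is ∞. *)
Definition S1 := option R.
Definition Pt := (S1 * S1)%type.

Definition strictly_convex_pos (g : R -> R) : Prop :=
  forall x y t, 0 < x -> 0 < y -> x <> y -> 0 < t < 1 ->
    g (t * x + (1 - t) * y) < t * g x + (1 - t) * g y.

(* f : R^+ -> R^+ strongly hyperbolic; f is given as a total function on R,
   only its values on (0, +oo) matter. *)
Definition strongly_hyperbolic (f : R -> R) : Prop :=
  (forall x, 0 < x -> 0 < f x) /\
  filterlim f (at_right 0) (Rbar_locally p_infty) /\
  filterlim f (Rbar_locally p_infty) (locally 0) /\
  strictly_convex_pos f /\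
  (forall b : R, filterlim (fun x => f (x + b) / f x) (Rbar_locally p_infty) (locally 1)) /\
  (forall x, 0 < x -> ex_derive f x) /\
  strictly_convex_pos (fun x => ln (Rabs (Derive f x))).

Definition f_abc (f1 f2 : R -> R) (a b c : R) (x : R) : R :=
  if Rlt_dec (- b) x then a * f1 (x + b) + c else - a * f2 (- x - b) + c.

Definition fbar (f1 f2 : R -> R) (a b c : R) : Pt -> Prop :=
  fun p => (exists x, x <> - b /\ p = (Some x, Some (f_abc f1 f2 a b c x)))
           \/ p = (Some (- b), None) \/ p = (None, Some c).

Definition lbar (s t : R) : Pt -> Prop :=
  fun p => (exists x, p = (Some x, Some (s * x + t))) \/ p = (None, None).

Definition in_Cminus (f1 f2 : R -> R) (C : Pt -> Prop) : Prop :=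
  (exists a b c, 0 < a /\ C = fbar f1 f2 a b c) \/
  (exists s t, s < 0 /\ C = lbar s t).

(* Main.v *)
Require Import Defs.
From Stdlib Require Import Reals Lra Classical.
From Coquelicot Require Import Coquelicot.
Open Scope R_scope.


Lemma lim0 f : filterlim f (Rbar_locally p_infty) (locally 0) ->
  forall eps, 0 < eps -> exists M, forall x, M < x -> Rabs (f x) < eps.
Proof.
intros H eps He. apply filterlim_locally with (eps := mkposreal eps He) in H.
destruct H as [M HM]. exists M. intros x Hx. specialize (HM x Hx).
unfold ball in HM; simpl in HM. unfold AbsRing_ball in HM.
unfold abs, minus, plus, opp in HM; simpl in HM.
rewrite Ropp_0, Rplus_0_r in HM. exact HM.
Qed.

Lemma tangent f x y : strictly_convex_pos f -> 0 < x -> 0 < y ->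
  ex_derive f x -> f x + Derive f x * (y - x) <= f y.
Proof.
intros Hc Hx Hy Hd.
destruct (Req_dec x y) as [->|Hxy]; [lra|].
apply Rnot_lt_le; intro Hlt.
set (l := Derive f x).
set (h := y - x).
assert (Hh : h <> 0) by (unfold h; lra).
assert (Hah : 0 < Rabs h) by (apply Rabs_pos_lt; auto).
set (d0 := f x + l * h - f y).
assert (Hd0 : 0 < d0) by (unfold d0, l, h; lra).
pose proof (Derive_correct f x Hd) as D.
apply is_derive_Reals in D.
destruct (D (d0 / Rabs h)) as [del Hdel].
{ apply Rdiv_lt_0_compat; auto. }
set (t := Rmin (1/2) (del / (2 * Rabs h))).
assert (Ht0 : 0 < t).
{ unfold t. apply Rmin_pos; [lra|]. apply Rdiv_lt_0_compat; [apply cond_pos|lra]. }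
assert (Ht1 : t < 1) by (unfold t; pose proof (Rmin_l (1/2) (del / (2 * Rabs h))); lra).
assert (Htd : t * Rabs h < del).
{ assert (t <= del / (2 * Rabs h)) by apply Rmin_r.
  pose proof (cond_pos del).
  apply Rle_lt_trans with (del / (2 * Rabs h) * Rabs h).
  apply Rmult_le_compat_r; lra.
  replace (del / (2 * Rabs h) * Rabs h) with (del/2) by (field; lra). lra. }
assert (Hth : t * h <> 0) by (apply Rmult_integral_contrapositive; split; lra).
assert (Hth2 : Rabs (t * h) < del) by (rewrite Rabs_mult, (Rabs_pos_eq t); lra).
specialize (Hdel (t*h) Hth Hth2).
fold l in Hdel.
assert (Hconv := Hc y x t Hy Hx (not_eq_sym Hxy) (conj Ht0 Ht1)).
replace (t * y + (1 - t) * x) with (x + t * h) in Hconv by (unfold h; ring).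
set (q := (f (x + t * h) - f x) / (t * h)) in Hdel.
assert (Hq : f (x + t * h) - f x = q * (t*h)) by (unfold q; field; repeat split; auto; lra).
assert (H1 : h * q < f y - f x).
{ assert (t * (h * q) < t * (f y - f x)) by nra.
  apply Rmult_lt_reg_l with t; lra. }
assert (H2 : Rabs (h * q - h * l) <= d0).
{ replace (h * q - h * l) with (h * (q - l)) by ring. rewrite Rabs_mult.
  apply Rle_trans with (Rabs h * (d0 / Rabs h)).
  apply Rmult_le_compat_l; [apply Rabs_pos| lra].
  right; field; lra. }
apply Rabs_le_between in H2.
unfold d0 in H2. lra.
Qed.

Section SH.
Variable f : R -> R.
Hypothesis Hsh : strongly_hyperbolic f.

Lemma sh_pos x : 0 < x -> 0 < f x.
Proof. destruct Hsh as [H _]; auto. Qed.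
Lemma sh_conv : strictly_convex_pos f.
Proof. destruct Hsh as (_&_&_&H&_); auto. Qed.
Lemma sh_lim : filterlim f (Rbar_locally p_infty) (locally 0).
Proof. destruct Hsh as (_&_&H&_); auto. Qed.
Lemma sh_der x : 0 < x -> ex_derive f x.
Proof. destruct Hsh as (_&_&_&_&_&H&_); auto. Qed.
Lemma sh_lnconv : strictly_convex_pos (fun x => ln (Rabs (Derive f x))).
Proof. destruct Hsh as (_&_&_&_&_&_&H); auto. Qed.

Lemma sh_small x eps : 0 < eps -> exists y, x < y /\ f y < eps.
Proof.
intros He. destruct (lim0 f sh_lim eps He) as [M HM].
exists (Rmax x M + 1). split. pose proof (Rmax_l x M); lra.
assert (M < Rmax x M + 1) by (pose proof (Rmax_r x M); lra).
specialize (HM _ H). apply Rabs_def2 in HM. lra.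
Qed.

Lemma sh_dneg x : 0 < x -> Derive f x < 0.
Proof.
intros Hx. apply Rnot_le_lt. intro H0.
destruct (sh_small x (f x) (sh_pos x Hx)) as [y [Hy1 Hy2]].
pose proof (tangent f x y sh_conv Hx ltac:(lra) (sh_der x Hx)).
nra.
Qed.

Lemma sh_dec x y : 0 < x -> x < y -> f y < f x.
Proof.
intros Hx Hxy.
destruct (MVT_cor2 f (Derive f) x y Hxy) as [c [Hc1 Hc2]].
{ intros c Hc. apply is_derive_Reals. apply Derive_correct. apply sh_der. lra. }
pose proof (sh_dneg c ltac:(lra)). nra.
Qed.
End SH.
Lemma chord g p q r : strictly_convex_pos g -> 0 < p -> p < q -> q < r ->
  (g q - g p) * (r - p) < (g r - g p) * (q - p) /\
  (g r - g p) * (r - q) < (g r - g q) * (r - p).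
Proof.
intros Hc Hp Hpq Hqr.
set (t := (r - q) / (r - p)).
assert (Ht : 0 < t < 1).
{ unfold t; split. apply Rdiv_lt_0_compat; lra.
  apply Rmult_lt_reg_r with (r - p); [lra|]. field_simplify; lra. }
pose proof (Hc p r t Hp ltac:(lra) ltac:(lra) Ht) as H.
replace (t * p + (1 - t) * r) with q in H by (unfold t; field; lra).
assert (Et : t * (r - p) = r - q) by (unfold t; field; lra).
split; nra.
Qed.

Lemma slope g z w d : strictly_convex_pos g -> 0 < z -> z < w -> 0 < d ->
  g (z + d) - g z < g (w + d) - g w.
Proof.
intros Hc Hz Hzw Hd.
destruct (chord g z (z+d) (w+d) Hc Hz ltac:(lra) ltac:(lra)) as [H1 _].
destruct (chord g z w (w+d) Hc Hz ltac:(lra) ltac:(lra)) as [_ H2].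
replace (w + d - z - z) with (w + d - z - z) in * by ring.
assert (E : (g (z + d) - g z) * (w + d - z) < (g (w + d) - g w) * (w + d - z)).
{ replace (z + d - z) with d in H1 by ring. replace (w + d - w) with d in H2 by ring. nra. }
apply Rmult_lt_reg_r with (w + d - z); lra.
Qed.

Definition AM1 {T} (S : T -> Prop) := forall p q, S p -> S q -> p = q.
Definition AM2 {T} (S : T -> Prop) := forall p q r, S p -> S q -> S r -> p = q \/ q = r \/ p = r.

Lemma am1_sort (P : R -> Prop) : (forall x y, P x -> P y -> x < y -> False) -> AM1 P.
Proof.
intros H x y Hx Hy. destruct (Rtotal_order x y) as [h|[h|h]]; auto.
exfalso; eauto. exfalso; eauto.
Qed.

Lemma am2_sort (P : R -> Prop) :
  (forall x y z, P x -> P y -> P z -> x < y -> y < z -> False) -> AM2 P.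
Proof.
intros H x y z Hx Hy Hz.
destruct (Req_dec x y); auto. destruct (Req_dec y z); auto. destruct (Req_dec x z); auto.
exfalso.
destruct (Rtotal_order x y) as [h1|[h1|h1]]; [|lra|];
destruct (Rtotal_order y z) as [h2|[h2|h2]]; try lra;
destruct (Rtotal_order x z) as [h3|[h3|h3]]; try lra; eauto.
Qed.

Section Side.
Variable f : R -> R.
Hypothesis Hsh : strongly_hyperbolic f.
Variables A A' d L : R.
Hypothesis HA : 0 < A.
Hypothesis HA' : 0 < A'.
Hypothesis Hd : 0 < d.

Let k y := A * f (y + d) - A' * f y.
Let K' y := A * Derive f (y + d) - A' * Derive f y.

Lemma k_der y : 0 < y -> derivable_pt_lim k y (K' y).
Proof.
intros Hy. apply is_derive_Reals. unfold k, K'.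
assert (H1 := sh_der f Hsh (y + d) ltac:(lra)).
assert (H2 := sh_der f Hsh y Hy).
auto_derive. auto. rewrite !Rmult_1_l. reflexivity.
Qed.

Lemma k_mvt a b : 0 < a -> a < b -> exists c, k b - k a = K' c * (b - a) /\ a < c < b.
Proof.
intros Ha Hab. apply MVT_cor2; auto. intros c Hc. apply k_der. lra.
Qed.

Lemma key x y : 0 < x -> x < y -> K' x = 0 -> 0 <= K' y -> False.
Proof.
intros Hx Hxy H0 H1. unfold K' in *.
set (u z := - Derive f z).
assert (Hu : forall z, 0 < z -> 0 < u z) by (intros z Hz; unfold u; pose proof (sh_dneg f Hsh z Hz); lra).
assert (Hr : forall z, 0 < z -> Rabs (Derive f z) = u z).
{ intros z Hz. unfold u. apply Rabs_left. apply sh_dneg; auto. }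
pose proof (slope _ x y d (sh_lnconv f Hsh) Hx Hxy Hd) as Hs. simpl in Hs.
rewrite !Hr in Hs by lra.
assert (E1 : A * u (x + d) = A' * u x) by (unfold u; lra).
assert (E2 : A * u (y + d) <= A' * u y) by (unfold u; lra).
assert (Hux := Hu x Hx). assert (Huxd := Hu (x+d) ltac:(lra)).
assert (Huy := Hu y ltac:(lra)). assert (Huyd := Hu (y+d) ltac:(lra)).
apply (f_equal ln) in E1. rewrite !ln_mult in E1 by auto.
apply ln_le in E2; [|apply Rmult_lt_0_compat; auto].
rewrite !ln_mult in E2 by auto.
lra.
Qed.

Definition sideP y := 0 < y /\ A * f (y + d) - A' * f y = L.

Lemma side_am2 : AM2 sideP.
Proof.
apply am2_sort. intros x y z [Hx Ex] [Hy Ey] [Hz Ez] Hxy Hyz.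
destruct (k_mvt x y Hx Hxy) as [c1 [E1 Hc1]].
destruct (k_mvt y z ltac:(lra) Hyz) as [c2 [E2 Hc2]].
unfold k in E1, E2. rewrite Ex, Ey in E1. rewrite Ey, Ez in E2.
assert (K' c1 = 0).
{ assert (K' c1 * (y - x) = 0) as E by lra. apply Rmult_integral in E as [|]; lra. }
assert (K' c2 = 0).
{ assert (K' c2 * (z - y) = 0) as E by lra. apply Rmult_integral in E as [|]; lra. }
apply (key c1 c2); lra.
Qed.

Lemma side_am1 : L <= 0 -> AM1 sideP.
Proof.
intros HL. apply am1_sort. intros x y [Hx Ex] [Hy Ey] Hxy.
destruct (k_mvt x y Hx Hxy) as [c1 [E1 Hc1]].
unfold k in E1. rewrite Ex, Ey in E1.
assert (Kc1 : K' c1 = 0).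
{ assert (K' c1 * (y - x) = 0) as E by lra. apply Rmult_integral in E as [|]; lra. }
assert (exists c2, y < c2 /\ 0 <= K' c2) as [c2 [Hc2 Kc2]].
{ destruct (Rlt_or_le (k (y+1)) L) as [Hlt|Hge].
  - destruct (sh_small f Hsh (y+1) (- k (y+1) / A')) as [z [Hz1 Hz2]].
    { apply Rdiv_lt_0_compat; lra. }
    assert (k (y+1) < k z).
    { unfold k at 2. pose proof (sh_pos f Hsh (z + d) ltac:(lra)).
      assert (A' * f z < - k (y+1)).
      { apply Rmult_lt_reg_l with (/A'). apply Rinv_0_lt_compat; lra.
        rewrite <- Rmult_assoc, Rinv_l, Rmult_1_l by lra.
        unfold Rdiv in Hz2. lra. }
      nra. }
    destruct (k_mvt (y+1) z ltac:(lra) Hz1) as [c [Ec Hc]].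
    exists c. split. lra.
    apply Rnot_lt_le. intro. nra.
  - destruct (k_mvt y (y+1) ltac:(lra) ltac:(lra)) as [c [Ec Hc]].
    exists c. split. lra. unfold k in Ec at 2. rewrite Ey in Ec.
    apply Rnot_lt_le. intro. nra. }
apply (key c1 c2); lra.
Qed.

Lemma side_pos y : 0 <= L -> sideP y -> A' < A.
Proof.
intros HL [Hy Ey].
pose proof (sh_dec f Hsh y (y+d) Hy ltac:(lra)).
pose proof (sh_pos f Hsh (y+d) ltac:(lra)).
nra.
Qed.
End Side.


Definition SCI (g : R -> R) (I : R -> Prop) := forall x y t, I x -> I y -> x <> y -> 0 < t < 1 ->
  g (t*x + (1-t)*y) < t * g x + (1-t) * g y.

Lemma sc_am2 g I v : SCI g I -> AM2 (fun x => I x /\ g x = v).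
Proof.
intros Hc. apply am2_sort. intros x y z [Ix Ex] [Iy Ey] [Iz Ez] Hxy Hyz.
set (t := (z - y) / (z - x)).
assert (Ht : 0 < t < 1).
{ unfold t; split. apply Rdiv_lt_0_compat; lra.
  apply Rmult_lt_reg_r with (z - x); [lra|]. field_simplify; lra. }
pose proof (Hc x z t Ix Iz ltac:(lra) Ht) as H.
replace (t * x + (1 - t) * z) with y in H by (unfold t; field; lra).
rewrite Ex, Ey, Ez in H. lra.
Qed.

Lemma sc_right f a b : strictly_convex_pos f -> 0 < a -> SCI (fun x => a * f (x + b)) (fun x => -b < x).
Proof.
intros Hc Ha x y t Hx Hy Hxy Ht.
replace (t * x + (1 - t) * y + b) with (t * (x + b) + (1 - t) * (y + b)) by ring.
pose proof (Hc (x+b) (y+b) t ltac:(lra) ltac:(lra) ltac:(lra) Ht). nra.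
Qed.

Lemma sc_left f a b : strictly_convex_pos f -> 0 < a -> SCI (fun x => a * f (- x - b)) (fun x => x < -b).
Proof.
intros Hc Ha x y t Hx Hy Hxy Ht.
replace (- (t * x + (1 - t) * y) - b) with (t * (-x - b) + (1 - t) * (-y - b)) by ring.
pose proof (Hc (-x-b) (-y-b) t ltac:(lra) ltac:(lra) ltac:(lra) Ht). nra.
Qed.

Lemma sc_add g h I : SCI g I -> SCI h I -> SCI (fun x => g x + h x) I.
Proof. intros H1 H2 x y t Hx Hy Hxy Ht. pose proof (H1 x y t Hx Hy Hxy Ht). pose proof (H2 x y t Hx Hy Hxy Ht). lra. Qed.

Lemma sc_lin g I s : SCI g I -> SCI (fun x => g x + s * x) I.
Proof. intros H1 x y t Hx Hy Hxy Ht. pose proof (H1 x y t Hx Hy Hxy Ht). nra. Qed.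

Lemma sc_mono g (I J : R -> Prop) : (forall x, I x -> J x) -> SCI g J -> SCI g I.
Proof. intros HIJ H x y t Hx Hy. apply H; auto. Qed.

Lemma am2_u11 {T} (S A B : T -> Prop) : (forall p, S p -> A p \/ B p) -> AM1 A -> AM1 B -> AM2 S.
Proof.
intros H HA HB p q r Hp Hq Hr.
destruct (H p Hp), (H q Hq), (H r Hr);
first [ left; apply HA; assumption | left; apply HB; assumption | right; left; apply HA; assumption
      | right; left; apply HB; assumption | right; right; apply HA; assumption | right; right; apply HB; assumption ].
Qed.

Lemma am2_u22x {T} (S A B : T -> Prop) : (forall p, S p -> A p \/ B p) -> AM2 A -> AM2 B ->
  (forall p q, A p -> B q -> False) -> AM2 S.
Proof.
intros H HA HB Hx p q r Hp Hq Hr.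
destruct (H p Hp), (H q Hq), (H r Hr); try (exfalso; eauto; fail); [apply HA; assumption | apply HB; assumption].
Qed.

Lemma am1_u11x {T} (S A B : T -> Prop) : (forall p, S p -> A p \/ B p) -> AM1 A -> AM1 B ->
  (forall p q, A p -> B q -> False) -> AM1 S.
Proof.
intros H HA HB Hx p q Hp Hq.
destruct (H p Hp), (H q Hq); try (exfalso; eauto; fail); [apply HA; assumption | apply HB; assumption].
Qed.

Lemma am2_sub {T} (S A : T -> Prop) : (forall p, S p -> A p) -> AM2 A -> AM2 S.
Proof. intros H HA p q r Hp Hq Hr. apply HA; auto. Qed.
Lemma am1_sub {T} (S A : T -> Prop) : (forall p, S p -> A p) -> AM1 A -> AM1 S.
Proof. intros H HA p q Hp Hq. apply HA; auto. Qed.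
Lemma am1_am2 {T} (S : T -> Prop) : AM1 S -> AM2 S.
Proof. intros H p q r Hp Hq Hr. left; auto. Qed.
Lemma am1_empty {T} (S : T -> Prop) : (forall p, S p -> False) -> AM1 S.
Proof. intros H p q Hp. exfalso; eauto. Qed.
Lemma am1_single {T} (p0 : T) : AM1 (fun p => p = p0).
Proof. intros p q -> ->; auto. Qed.

Lemma am2_map (P Q : R -> Prop) g : (forall x, P x -> Q (g x)) -> (forall x y, g x = g y -> x = y) -> AM2 Q -> AM2 P.
Proof.
intros H Hi HQ x y z Hx Hy Hz. destruct (HQ (g x) (g y) (g z)) as [E|[E|E]]; auto.
Qed.
Lemma am1_map (P Q : R -> Prop) g : (forall x, P x -> Q (g x)) -> (forall x y, g x = g y -> x = y) -> AM1 Q -> AM1 P.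
Proof. intros H Hi HQ x y Hx Hy. apply Hi, HQ; auto. Qed.

Definition graph (Z : R -> Prop) (h : R -> R) : Pt -> Prop :=
  fun p => exists x, Z x /\ p = (Some x, Some (h x)).

Lemma graph_am2 Z h : AM2 Z -> AM2 (graph Z h).
Proof.
intros H p q r [x [Hx ->]] [y [Hy ->]] [z [Hz ->]].
destruct (H x y z Hx Hy Hz) as [->|[->| ->]]; auto.
Qed.
Lemma graph_am1 Z h : AM1 Z -> AM1 (graph Z h).
Proof. intros H p q [x [Hx ->]] [y [Hy ->]]. rewrite (H x y Hx Hy). auto. Qed.

Lemma fR f1 f2 a b c x : -b < x -> f_abc f1 f2 a b c x = a * f1 (x + b) + c.
Proof. intros H. unfold f_abc. destruct (Rlt_dec (-b) x); [auto|lra]. Qed.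
Lemma fL f1 f2 a b c x : x < -b -> f_abc f1 f2 a b c x = - a * f2 (- x - b) + c.
Proof. intros H. unfold f_abc. destruct (Rlt_dec (-b) x); [lra|auto]. Qed.


Definition Zff f1 f2 a b c a' b' c' x :=
  x <> -b /\ x <> -b' /\ f_abc f1 f2 a b c x = f_abc f1 f2 a' b' c' x.

Lemma Zff_sym f1 f2 a b c a' b' c' x : Zff f1 f2 a b c a' b' c' x -> Zff f1 f2 a' b' c' a b c x.
Proof. intros (H1&H2&H3). repeat split; auto. Qed.

Section FF.
Variables f1 f2 : R -> R.
Hypothesis H1 : strongly_hyperbolic f1.
Hypothesis H2 : strongly_hyperbolic f2.
Variables a b c a' b' c' : R.
Hypothesis Ha : 0 < a.
Hypothesis Ha' : 0 < a'.
Hypothesis Hbb : b' < b.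

Let L := c' - c.
Let d := b - b'.
Definition Zl x := x < -b /\ a' * f2 (-x-b') - a * f2 (-x-b) = c' - c.
Definition Zm x := (-b < x < -b') /\ a * f1 (x+b) + a' * f2 (-x-b') = c' - c.
Definition Zr x := -b' < x /\ a * f1 (x+b) - a' * f1 (x+b') = c' - c.

Lemma decomp x : Zff f1 f2 a b c a' b' c' x -> Zl x \/ Zm x \/ Zr x.
Proof.
intros (Hx1 & Hx2 & E).
destruct (Rtotal_order x (-b)) as [h|[h|h]]; [|lra|].
- left. rewrite (fL _ _ a b c x h), (fL _ _ a' b' c' x ltac:(lra)) in E. split; auto. lra.
- destruct (Rtotal_order x (-b')) as [h'|[h'|h']]; [|lra|].
  + right; left. rewrite (fR _ _ a b c x h), (fL _ _ a' b' c' x h') in E. split; [lra|]. lra.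
  + right; right. rewrite (fR _ _ a b c x h), (fR _ _ a' b' c' x h') in E. split; auto. lra.
Qed.

Lemma Zl_map x : Zl x -> sideP f2 a' a d L (-x-b).
Proof.
intros [h E]. split. lra. unfold d, L.
replace (- x - b + (b - b')) with (-x-b') by ring. exact E.
Qed.

Lemma Zr_map x : Zr x -> sideP f1 a a' d L (x+b').
Proof.
intros [h E]. split. lra. unfold d, L.
replace (x + b' + (b - b')) with (x+b) by ring. exact E.
Qed.

Lemma Zl_am2 : AM2 Zl.
Proof.
apply (am2_map _ _ (fun x => -x-b) Zl_map). intros; lra.
apply side_am2; auto. unfold d; lra.
Qed.
Lemma Zr_am2 : AM2 Zr.
Proof.
apply (am2_map _ _ (fun x => x+b') Zr_map). intros; lra.
apply side_am2; auto. unfold d; lra.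
Qed.
Lemma Zl_am1 : c' - c <= 0 -> AM1 Zl.
Proof.
intros HL. apply (am1_map _ _ (fun x => -x-b) Zl_map). intros; lra.
apply side_am1; auto. unfold d; lra.
Qed.
Lemma Zr_am1 : c' - c <= 0 -> AM1 Zr.
Proof.
intros HL. apply (am1_map _ _ (fun x => x+b') Zr_map). intros; lra.
apply side_am1; auto. unfold d; lra.
Qed.
Lemma Zm_am2 : AM2 Zm.
Proof.
unfold Zm.
apply (sc_am2 (fun x => a * f1 (x+b) + a' * f2 (-x-b')) (fun x => -b < x < -b')).
apply sc_add.
- apply (sc_mono _ _ (fun x => -b < x)). intros; lra. apply sc_right; auto. apply sh_conv; auto.
- apply (sc_mono _ _ (fun x => x < -b')). intros; lra. apply sc_left; auto. apply sh_conv; auto.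
Qed.
Lemma Zm_pos x : Zm x -> 0 < c' - c.
Proof.
intros [h E]. pose proof (sh_pos f1 H1 (x+b) ltac:(lra)). pose proof (sh_pos f2 H2 (-x-b') ltac:(lra)). nra.
Qed.
Lemma Zm_Zr x y : Zm x -> Zr y -> False.
Proof.
intros [h E] [h' E'].
pose proof (sh_dec f1 H1 (x+b) (y+b) ltac:(lra) ltac:(lra)).
pose proof (sh_pos f2 H2 (-x-b') ltac:(lra)). pose proof (sh_pos f1 H1 (y+b') ltac:(lra)).
nra.
Qed.
Lemma Zm_Zl x y : Zm x -> Zl y -> False.
Proof.
intros [h E] [h' E'].
pose proof (sh_dec f2 H2 (-x-b') (-y-b') ltac:(lra) ltac:(lra)).
pose proof (sh_pos f1 H1 (x+b) ltac:(lra)). pose proof (sh_pos f2 H2 (-y-b) ltac:(lra)).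
nra.
Qed.
Lemma Zl_Zr x y : 0 <= c' - c -> Zl x -> Zr y -> False.
Proof.
intros HL hx hy.
pose proof (side_pos f2 H2 a' a d L Ha ltac:(unfold d; lra) (-x-b) HL (Zl_map x hx)).
pose proof (side_pos f1 H1 a a' d L Ha' ltac:(unfold d; lra) (y+b') HL (Zr_map y hy)).
lra.
Qed.

Lemma Zff_am2_lt : AM2 (Zff f1 f2 a b c a' b' c').
Proof.
destruct (Rle_or_lt (c' - c) 0) as [HL|HL].
- apply (am2_u11 _ Zl Zr).
  + intros x hx. destruct (decomp x hx) as [h|[h|h]]; auto.
    exfalso. pose proof (Zm_pos x h). lra.
  + apply Zl_am1; auto.
  + apply Zr_am1; auto.
- destruct (classic (exists x0, Zm x0)) as [[x0 Hx0]|Hn].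
  + apply (am2_sub _ Zm); [|apply Zm_am2].
    intros x hx. destruct (decomp x hx) as [h|[h|h]]; auto.
    exfalso; eapply Zm_Zl; eauto. exfalso; eapply Zm_Zr; eauto.
  + apply (am2_u22x _ Zl Zr).
    * intros x hx. destruct (decomp x hx) as [h|[h|h]]; auto. exfalso; eauto.
    * apply Zl_am2.
    * apply Zr_am2.
    * intros x y; apply Zl_Zr; lra.
Qed.

Lemma Zff_am1_lt : c = c' -> AM1 (Zff f1 f2 a b c a' b' c').
Proof.
intros Hc.
apply (am1_u11x _ Zl Zr).
+ intros x hx. destruct (decomp x hx) as [h|[h|h]]; auto.
  exfalso. pose proof (Zm_pos x h). lra.
+ apply Zl_am1; lra.
+ apply Zr_am1; lra.
+ intros x y; apply Zl_Zr; lra.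
Qed.
End FF.

Lemma Zff_am2 f1 f2 a b c a' b' c' : strongly_hyperbolic f1 -> strongly_hyperbolic f2 ->
  0 < a -> 0 < a' -> b <> b' -> AM2 (Zff f1 f2 a b c a' b' c').
Proof.
intros H1 H2 Ha Ha' Hb. destruct (Rtotal_order b b') as [h|[h|h]]; [|lra|].
- apply (am2_sub _ (Zff f1 f2 a' b' c' a b c)). intros; apply Zff_sym; auto.
  apply Zff_am2_lt; auto.
- apply Zff_am2_lt; auto.
Qed.

Lemma Zff_am1 f1 f2 a b c a' b' c' : strongly_hyperbolic f1 -> strongly_hyperbolic f2 ->
  0 < a -> 0 < a' -> b <> b' -> c = c' -> AM1 (Zff f1 f2 a b c a' b' c').
Proof.
intros H1 H2 Ha Ha' Hb Hc. destruct (Rtotal_order b b') as [h|[h|h]]; [|lra|].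
- apply (am1_sub _ (Zff f1 f2 a' b' c' a b c)). intros; apply Zff_sym; auto.
  apply Zff_am1_lt; auto.
- apply Zff_am1_lt; auto.
Qed.

Lemma Zff_am1_eqb f1 f2 a b c a' c' : strongly_hyperbolic f1 -> strongly_hyperbolic f2 ->
  0 < a -> 0 < a' -> c <> c' -> AM1 (Zff f1 f2 a b c a' b c').
Proof.
intros H1 H2 Ha Ha' Hc.
assert (Hinj1 : forall x y, 0 < x -> 0 < y -> f1 x = f1 y -> x = y).
{ intros x y hx hy E. destruct (Rtotal_order x y) as [h|[h|h]]; auto.
  pose proof (sh_dec f1 H1 x y hx h); lra. pose proof (sh_dec f1 H1 y x hy h); lra. }
assert (Hinj2 : forall x y, 0 < x -> 0 < y -> f2 x = f2 y -> x = y).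
{ intros x y hx hy E. destruct (Rtotal_order x y) as [h|[h|h]]; auto.
  pose proof (sh_dec f2 H2 x y hx h); lra. pose proof (sh_dec f2 H2 y x hy h); lra. }
assert (Hmix : forall P Q, 0 < P -> 0 < Q -> (a - a') * P = c' - c -> - (a - a') * Q = c' - c -> False).
{ intros P Q hP hQ E1 E2.
  assert (E3 : (c' - c) * (c' - c) = - ((a - a') * (a - a')) * (P * Q)) by (rewrite <- E1 at 1; rewrite <- E2; ring).
  assert (0 <= (a - a') * (a - a')) by nra.
  assert (0 < P * Q) by nra.
  assert ((c' - c) * (c' - c) <= 0) by nra.
  assert (c' - c <> 0) by lra.
  assert (0 < (c' - c) * (c' - c)) by (apply Rsqr_pos_lt; auto). lra. }
assert (Hfac : forall P Q, (a - a') * P = c' - c -> (a - a') * Q = c' - c -> P = Q).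
{ intros P Q E1 E2. assert (a - a' <> 0).
  { intro h0. rewrite h0 in E1. lra. }
  apply Rmult_eq_reg_l with (a - a'); lra. }
intros x y (hx1&_&Ex) (hy1&_&Ey).
destruct (Rtotal_order x (-b)) as [hx|[hx|hx]]; [|lra|];
destruct (Rtotal_order y (-b)) as [hy|[hy|hy]]; try lra.
- rewrite (fL _ _ a b c x hx), (fL _ _ a' b c' x hx) in Ex.
  rewrite (fL _ _ a b c y hy), (fL _ _ a' b c' y hy) in Ey.
  assert (f2 (-x-b) = f2 (-y-b)).
  { assert (- f2 (-x-b) = - f2 (-y-b)) by (apply Hfac; lra). lra. }
  apply Hinj2 in H; lra.
- rewrite (fL _ _ a b c x hx), (fL _ _ a' b c' x hx) in Ex.
  rewrite (fR _ _ a b c y hy), (fR _ _ a' b c' y hy) in Ey.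
  exfalso. apply (Hmix (f1 (y+b)) (f2 (-x-b))); try lra.
  apply sh_pos; auto; lra. apply sh_pos; auto; lra.
- rewrite (fR _ _ a b c x hx), (fR _ _ a' b c' x hx) in Ex.
  rewrite (fL _ _ a b c y hy), (fL _ _ a' b c' y hy) in Ey.
  exfalso. apply (Hmix (f1 (x+b)) (f2 (-y-b))); try lra.
  apply sh_pos; auto; lra. apply sh_pos; auto; lra.
- rewrite (fR _ _ a b c x hx), (fR _ _ a' b c' x hx) in Ex.
  rewrite (fR _ _ a b c y hy), (fR _ _ a' b c' y hy) in Ey.
  assert (f1 (x+b) = f1 (y+b)).
  { apply (Hfac (f1 (x+b)) (f1 (y+b))); lra. }
  apply Hinj1 in H; lra.
Qed.


Definition Zfl f1 f2 a b c s t x := x <> -b /\ f_abc f1 f2 a b c x = s * x + t.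

Lemma Zfl_am2 f1 f2 a b c s t : strongly_hyperbolic f1 -> strongly_hyperbolic f2 ->
  0 < a -> s < 0 -> AM2 (Zfl f1 f2 a b c s t).
Proof.
intros H1 H2 Ha Hs.
apply (am2_u22x _ (fun x => x < -b /\ a * f2 (-x-b) + s * x = c - t)
                  (fun x => -b < x /\ a * f1 (x+b) + (-s) * x = t - c)).
- intros x (hx & E). destruct (Rtotal_order x (-b)) as [h|[h|h]]; [|lra|].
  + left. rewrite (fL _ _ a b c x h) in E. split; auto; lra.
  + right. rewrite (fR _ _ a b c x h) in E. split; auto; lra.
- apply (sc_am2 (fun x => a * f2 (-x-b) + s * x) (fun x => x < -b)).
  apply sc_lin. apply sc_left; auto. apply sh_conv; auto.
- apply (sc_am2 (fun x => a * f1 (x+b) + (-s) * x) (fun x => -b < x)).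
  apply sc_lin. apply sc_right; auto. apply sh_conv; auto.
- intros x y [hx Ex] [hy Ey].
  pose proof (sh_pos f2 H2 (-x-b) ltac:(lra)). pose proof (sh_pos f1 H1 (y+b) ltac:(lra)).
  nra.
Qed.

Lemma Zll_am1 s t s' t' : ~ (s = s' /\ t = t') -> AM1 (fun x => s * x + t = s' * x + t').
Proof.
intros Hn x y Ex Ey.
destruct (Req_dec s s') as [->|Hs].
- exfalso. apply Hn. split; auto. lra.
- apply Rmult_eq_reg_l with (s - s'). lra. lra.
Qed.

Lemma cm_ff f1 f2 a b c a' b' c' p : fbar f1 f2 a b c p -> fbar f1 f2 a' b' c' p ->
  (p = (Some (-b), None) /\ b = b') \/ (p = (None, Some c) /\ c = c') \/
  graph (Zff f1 f2 a b c a' b' c') (f_abc f1 f2 a b c) p.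
Proof.
intros [[x [hx ->]]|[->| ->]] [[y [hy E]]|[E|E]]; try discriminate.
- injection E; intros E2 E1. subst y. right; right. exists x. split; auto.
  repeat split; auto.
- injection E; intros E1. left; split; auto. lra.
- injection E; intros E1. right; left; split; auto.
Qed.

Lemma cm_fl f1 f2 a b c s t p : fbar f1 f2 a b c p -> lbar s t p ->
  graph (Zfl f1 f2 a b c s t) (f_abc f1 f2 a b c) p.
Proof.
intros [[x [hx ->]]|[->| ->]] [[y E]|E]; try discriminate.
injection E; intros E2 E1. subst y. exists x. split; auto. split; auto.
Qed.

Lemma cm_ll s t s' t' p : lbar s t p -> lbar s' t' p ->
  p = (None, None) \/ graph (fun x => s * x + t = s' * x + t') (fun x => s * x + t) p.
Proof.
intros [[x ->]| ->] [[y E]|E]; try discriminate; auto.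
injection E; intros E2 E1. subst y. right. exists x. split; auto.
Qed.

Lemma am2_conj_sym {T} (C D : T -> Prop) : AM2 (fun p => D p /\ C p) -> AM2 (fun p => C p /\ D p).
Proof. intros H p q r [] [] []. apply H; split; auto. Qed.

Lemma ff_case f1 f2 a b c a' b' c' : strongly_hyperbolic f1 -> strongly_hyperbolic f2 ->
  0 < a -> 0 < a' -> fbar f1 f2 a b c <> fbar f1 f2 a' b' c' ->
  AM2 (fun p => fbar f1 f2 a b c p /\ fbar f1 f2 a' b' c' p).
Proof.
intros H1 H2 Ha Ha' Hne.
destruct (Req_dec b b') as [Hb|Hb]; destruct (Req_dec c c') as [Hc|Hc].
- subst b' c'.
  assert (Haa : a <> a') by (intro; subst; auto).
  assert (HZ : forall x, Zff f1 f2 a b c a' b c x -> False).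
  { intros x (hx&_&E). destruct (Rtotal_order x (-b)) as [h|[h|h]]; [|lra|].
    - rewrite (fL _ _ a b c x h), (fL _ _ a' b c x h) in E.
      pose proof (sh_pos f2 H2 (-x-b) ltac:(lra)).
      apply Haa. apply Rmult_eq_reg_r with (f2 (-x-b)); lra.
    - rewrite (fR _ _ a b c x h), (fR _ _ a' b c x h) in E.
      pose proof (sh_pos f1 H1 (x+b) ltac:(lra)).
      apply Haa. apply Rmult_eq_reg_r with (f1 (x+b)); lra. }
  apply (am2_u11 _ (fun p => p = (Some (-b), None)) (fun p => p = (None, Some c))).
  + intros p [hp hq]. destruct (cm_ff _ _ _ _ _ _ _ _ p hp hq) as [[]|[[]|[x [hx _]]]]; auto.
    exfalso; eauto.
  + apply am1_single.
  + apply am1_single.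
- subst b'.
  apply (am2_u11 _ (fun p => p = (Some (-b), None)) (graph (Zff f1 f2 a b c a' b c') (f_abc f1 f2 a b c))).
  + intros p [hp hq]. destruct (cm_ff _ _ _ _ _ _ _ _ p hp hq) as [[]|[[]|]]; auto.
    contradiction.
  + apply am1_single.
  + apply graph_am1. apply Zff_am1_eqb; auto.
- subst c'.
  apply (am2_u11 _ (fun p => p = (None, Some c)) (graph (Zff f1 f2 a b c a' b' c) (f_abc f1 f2 a b c))).
  + intros p [hp hq]. destruct (cm_ff _ _ _ _ _ _ _ _ p hp hq) as [[]|[[]|]]; auto.
    contradiction.
  + apply am1_single.
  + apply graph_am1. apply Zff_am1; auto.
- apply (am2_sub _ (graph (Zff f1 f2 a b c a' b' c') (f_abc f1 f2 a b c))).
  + intros p [hp hq]. destruct (cm_ff _ _ _ _ _ _ _ _ p hp hq) as [[]|[[]|]]; auto; contradiction.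
  + apply graph_am2. apply Zff_am2; auto.
Qed.

Lemma fl_case f1 f2 a b c s t : strongly_hyperbolic f1 -> strongly_hyperbolic f2 ->
  0 < a -> s < 0 -> AM2 (fun p => fbar f1 f2 a b c p /\ lbar s t p).
Proof.
intros H1 H2 Ha Hs.
apply (am2_sub _ (graph (Zfl f1 f2 a b c s t) (f_abc f1 f2 a b c))).
- intros p [hp hq]. apply cm_fl; auto.
- apply graph_am2. apply Zfl_am2; auto.
Qed.

Lemma ll_case s t s' t' : lbar s t <> lbar s' t' -> AM2 (fun p => lbar s t p /\ lbar s' t' p).
Proof.
intros Hne.
apply (am2_u11 _ (fun p => p = (None, None)) (graph (fun x => s * x + t = s' * x + t') (fun x => s * x + t))).
- intros p [hp hq]. apply cm_ll; auto.
- apply am1_single.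
- apply graph_am1. apply Zll_am1. intros [-> ->]. auto.
Qed.

Theorem theorem4p8 (f1 f2 : R -> R) :
  strongly_hyperbolic f1 -> strongly_hyperbolic f2 ->
  forall C D : Pt -> Prop,
    in_Cminus f1 f2 C -> in_Cminus f1 f2 D -> C <> D ->
    forall p q r : Pt,
      C p -> D p -> C q -> D q -> C r -> D r ->
      p = q \/ q = r \/ p = r.
Proof.
intros H1 H2 C D HC HD Hne p q r Cp Dp Cq Dq Cr Dr.
assert (HA : AM2 (fun p => C p /\ D p)).
{ destruct HC as [(a&b&c&Ha&->)|(s&t&Hs&->)]; destruct HD as [(a'&b'&c'&Ha'&->)|(s'&t'&Hs'&->)].
  - apply ff_case; auto.
  - apply fl_case; auto.
  - apply am2_conj_sym. apply fl_case; auto.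
  - apply ll_case; auto. }
apply HA; split; auto.
Qed.
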